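(* Let $a,b$ be coprime positive integers with $ab\ne1$. Then $$M_{a,b}(B)=\#\left\{(s,t)\in\mathbb{Z}^2:\ \begin{array}{l}\gcd(s,t)=1,\ s(s-at)\ne0,\ s/t\ne(a^2-b^2)/(2a),\\ t>0,\ 0<-Q_3(s,t),\\ 0<-Q_j(s,t)\le \lambda B/\max\{a,b\}\text{ for }j=1,2\end{array}\right\}+O(1),$$ where $\lambda=\gcd(Q_1(s,t),Q_2(s,t))$.
   Context: $M_{a,b}(B)$ is the number of $(x,y,z)\in\mathbb{N}^3$ with $(a^2-b^2)x^2+(a^2+b^2)y^2=2z^2$, $\gcd(x,y)=1$ and $\max\{a,b\}\max\{x,y\}\le B$. The binary quadratic forms are $Q_1(s,t)=2s^2+(a^2-b^2)t^2-4ast$, $Q_2(s,t)=-2s^2+(a^2-b^2)t^2$, $Q_3(s,t)=-2as^2+2(a^2-b^2)st-a(a^2-b^2)t^2$. The implied constant is absolute. *)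

(* Defs.v *)
From Stdlib Require Import ZArith Reals List.
Import ListNotations.
Open Scope Z_scope.

Definition card_is {T : Type} (P : T -> Prop) (n : nat) : Prop :=
  exists l : list T, NoDup l /\ length l = n /\ (forall x, In x l <-> P x).

Definition Q1 (a b s t : Z) : Z := 2*s^2 + (a^2 - b^2)*t^2 - 4*a*s*t.
Definition Q2 (a b s t : Z) : Z := -2*s^2 + (a^2 - b^2)*t^2.
Definition Q3 (a b s t : Z) : Z := -2*a*s^2 + 2*(a^2 - b^2)*s*t - a*(a^2 - b^2)*t^2.

Definition M_set (a b : Z) (B : R) (p : Z * Z * Z) : Prop :=
  let '(x, y, z) := p in
  0 < x /\ 0 < y /\ 0 < z /\
  (a^2 - b^2)*x^2 + (a^2 + b^2)*y^2 = 2*z^2 /\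
  Z.gcd x y = 1 /\
  (IZR (Z.max a b * Z.max x y) <= B)%R.

Definition ST_set (a b : Z) (B : R) (p : Z * Z) : Prop :=
  let '(s, t) := p in
  let lam := Z.gcd (Q1 a b s t) (Q2 a b s t) in
  Z.gcd s t = 1 /\ s * (s - a*t) <> 0 /\
  (IZR s / IZR t <> IZR (a^2 - b^2) / IZR (2*a))%R /\
  0 < t /\ 0 < - Q3 a b s t /\
  0 < - Q1 a b s t /\ (IZR (- Q1 a b s t) <= IZR lam * B / IZR (Z.max a b))%R /\
  0 < - Q2 a b s t /\ (IZR (- Q2 a b s t) <= IZR lam * B / IZR (Z.max a b))%R.

(* Main.v *)
Require Import Defs.
From Stdlib Require Import ZArith Reals List Lia Lra Psatz Classical.
Import ListNotations.
Open Scope Z_scope.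


Lemma card_of_incl {T : Type} (P : T -> Prop) (L : list T) :
  (forall x, P x -> In x L) -> exists n, card_is P n.
Proof.
  revert P; induction L as [|a L IH]; intros P HP.
  - exists 0%nat, []. split; [constructor|split; [reflexivity|]].
    intros x; split; [intros []|intros Hx; exact (HP x Hx)].
  - destruct (IH (fun x => P x /\ x <> a)) as [n [l [Hnd [Hl Hin]]]].
    { intros x [Hx Hxa]. destruct (HP x Hx); [congruence|assumption]. }
    destruct (classic (P a)) as [Pa|nPa].
    + exists (S n), (a :: l). split; [|split].
      * constructor; [|exact Hnd]. intros H. apply Hin in H. tauto.
      * simpl; congruence.
      * intros x; simpl; split.
        -- intros [<-|H]; [exact Pa|apply Hin in H; tauto].
        -- intros Px. destruct (classic (x = a)) as [->|Hxa]; [left; reflexivity|].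
           right; apply Hin; tauto.
    + exists n, l. split; [exact Hnd|split; [exact Hl|]].
      intros x; split.
      * intros H; apply Hin in H; tauto.
      * intros Px. apply Hin. split; [exact Px|]. intros ->; tauto.
Qed.

Lemma nodup_map_inj {A B : Type} (f : A -> B) (l : list A) :
  NoDup l -> (forall x y, In x l -> In y l -> f x = f y -> x = y) ->
  NoDup (map f l).
Proof.
  induction l as [|a l IH]; intros Hnd Hinj; simpl; [constructor|].
  inversion Hnd; subst. constructor.
  - intros H. apply in_map_iff in H as [y [Hy Hyl]].
    assert (y = a) by (apply Hinj; simpl; auto). subst; contradiction.
  - apply IH; auto. intros x y Hx Hy; apply Hinj; simpl; auto.
Qed.

Lemma count2 {A B : Type} (decA : forall x y : A, {x = y} + {x <> y})
  (decB : forall x y : B, {x = y} + {x <> y}) (g : A -> B) (l : list A) :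
  NoDup l -> (forall x y, In x l -> In y l -> g x = g y -> x = y) ->
  forall (X : list B) (Y : list A),
  (forall x, In x l -> In (g x) X \/ In x Y) ->
  (length l <= length X + length Y)%nat.
Proof.
  induction l as [|a l IH]; intros Hnd Hinj X Y Hc; simpl; [lia|].
  inversion Hnd as [|? ? Hna Hnd']; subst.
  assert (Hinj' : forall x y, In x l -> In y l -> g x = g y -> x = y)
    by (intros x y Hx Hy; apply Hinj; simpl; auto).
  destruct (Hc a (or_introl eq_refl)) as [HX|HY].
  - pose proof (remove_length_lt decB X (g a) HX).
    assert (length l <= length (remove decB (g a) X) + length Y)%nat; [|lia].
    apply IH; auto. intros x Hx.
    destruct (Hc x (or_intror Hx)) as [H1|H1]; [left|right; exact H1].
    apply in_in_remove; auto. intros E. assert (x = a) by (apply Hinj; simpl; auto).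
    subst; contradiction.
  - pose proof (remove_length_lt decA Y a HY).
    assert (length l <= length X + length (remove decA a Y))%nat; [|lia].
    apply IH; auto. intros x Hx.
    destruct (Hc x (or_intror Hx)) as [H1|H1]; [left; exact H1|right].
    apply in_in_remove; auto. intros ->; contradiction.
Qed.

Definition rng (n : Z) : list Z := map Z.of_nat (seq 0 (Z.to_nat n)).
Lemma in_rng x n : 0 <= x < n -> In x (rng n).
Proof.
  intros H. unfold rng. apply in_map_iff. exists (Z.to_nat x). split; [lia|].
  apply in_seq. lia.
Qed.


Definition DD a b := a^2 - b^2.
Definition EE a b := a^2 + b^2.

Lemma idQ1 a b X Y Z :
  Q1 a b (DD a b*(a*X+Z)) (DD a b*X - EE a b*Y + 2*a*Z) =
  -2*DD a b*EE a b*(DD a b*X - EE a b*Y + 2*a*Z)*X + DD a b*EE a b*(DD a b*X^2+EE a b*Y^2-2*Z^2).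
Proof. unfold Q1, DD, EE; ring. Qed.
Lemma idQ2 a b X Y Z :
  Q2 a b (DD a b*(a*X+Z)) (DD a b*X - EE a b*Y + 2*a*Z) =
  -2*DD a b*EE a b*(DD a b*X - EE a b*Y + 2*a*Z)*Y - DD a b*EE a b*(DD a b*X^2+EE a b*Y^2-2*Z^2).
Proof. unfold Q2, DD, EE; ring. Qed.
Lemma idQ3 a b X Y Z :
  Q3 a b (DD a b*(a*X+Z)) (DD a b*X - EE a b*Y + 2*a*Z) =
  -2*DD a b*EE a b*(DD a b*X - EE a b*Y + 2*a*Z)*Z - a*DD a b*EE a b*(DD a b*X^2+EE a b*Y^2-2*Z^2).
Proof. unfold Q3, DD, EE; ring. Qed.
Lemma fwd1 a b s t : a * Q1 a b s t + Q3 a b s t = -2*EE a b*s*t.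
Proof. unfold Q1, Q3, EE; ring. Qed.
Lemma fwd2 a b s t : DD a b * Q1 a b s t - EE a b * Q2 a b s t + 2*a*Q3 a b s t = -2*DD a b*EE a b*t*t.
Proof. unfold Q1, Q2, Q3, DD, EE; ring. Qed.
Lemma conicQ a b s t : DD a b * Q1 a b s t ^2 + EE a b * Q2 a b s t ^2 = 2 * Q3 a b s t ^2.
Proof. unfold Q1, Q2, Q3, DD, EE; ring. Qed.
Lemma Q1sc a b c s t : Q1 a b (c*s) (c*t) = c^2 * Q1 a b s t.
Proof. unfold Q1; ring. Qed.
Lemma Q2sc a b c s t : Q2 a b (c*s) (c*t) = c^2 * Q2 a b s t.
Proof. unfold Q2; ring. Qed.
Lemma Q3sc a b c s t : Q3 a b (c*s) (c*t) = c^2 * Q3 a b s t.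
Proof. unfold Q3; ring. Qed.

Lemma EE_pos a b : 0 < a -> 0 < EE a b.
Proof. intros; unfold EE; nia. Qed.

Lemma DD_nz a b : 0 < a -> 0 < b -> Z.gcd a b = 1 -> a * b <> 1 -> DD a b <> 0.
Proof.
  intros Ha Hb Hg Hab HD. unfold DD in HD.
  assert (a = b) by nia. subst. rewrite Z.gcd_diag in Hg. lia.
Qed.

Lemma Q12_zero a b s t : 0 < a -> DD a b <> 0 -> Q1 a b s t = 0 -> Q2 a b s t = 0 -> s = 0 /\ t = 0.
Proof.
  intros Ha HD H1 H2.
  assert (Hs : Q1 a b s t + Q2 a b s t = 2*t*(DD a b*t - 2*a*s)) by (unfold Q1, Q2, DD; ring).
  rewrite H1, H2 in Hs.
  destruct (Z.eq_dec t 0) as [->|Ht].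
  - unfold Q2 in H2. split; [nia|reflexivity].
  - assert (E1 : DD a b * t = 2*a*s) by nia.
    assert (E2 : 4*a^2*Q2 a b s t = - 2*(2*a*s)^2 + 4*a^2*DD a b*t^2) by (unfold Q2, DD; ring).
    rewrite <- E1, H2 in E2.
    assert (E3 : 2 * DD a b * t^2 * (2*a^2 - DD a b) = 0) by nia.
    assert (2*a^2 - DD a b = EE a b) by (unfold DD, EE; ring).
    pose proof (EE_pos a b Ha). exfalso. nia.
Qed.

Lemma Q_not_all_pos a b s t : 0 < a -> 0 < b -> DD a b <> 0 ->
  ~ (0 < Q2 a b s t /\ 0 < Q3 a b s t).
Proof.
  intros Ha Hb HD [H2 H3]. unfold Q2, Q3, DD in *.
  destruct (Z_lt_le_dec 0 (a^2-b^2)) as [Hp|Hn].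
  - assert (2*a*(-Q3 a b s t) = (2*a*s - (a^2-b^2)*t)^2 + (a^2-b^2)*(a^2+b^2)*t^2)
      by (unfold Q3; ring).
    unfold Q3 in H. nia.
  - nia.
Qed.


Lemma sqdiv (l w c : Z) : 0 < l -> 2 * w^2 = c * l^2 -> (l | w).
Proof.
  intros Hl Hc.
  set (g := Z.gcd l w).
  assert (Hg : 0 < g). { pose proof (Z.gcd_nonneg l w).
    assert (g <> 0) by (unfold g; rewrite Z.gcd_eq_0; lia). lia. }
  destruct (Z.gcd_divide_l l w) as [l' Hl']. destruct (Z.gcd_divide_r l w) as [w' Hw'].
  fold g in Hl', Hw'.
  assert (Hcop : Z.gcd l' w' = 1).
  { assert (l' = l / g) by (rewrite Hl'; rewrite Z.div_mul; lia).
    assert (w' = w / g) by (rewrite Hw'; rewrite Z.div_mul; lia).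
    subst l' w'. apply Z.gcd_div_gcd; [lia|reflexivity]. }
  assert (Hl'p : 0 < l') by nia.
  assert (Hc2 : 2 * w'^2 = c * l'^2).
  { rewrite Hl', Hw' in Hc. assert (g^2 * (2*w'^2 - c*l'^2) = 0) by nia.
    apply Z.mul_eq_0 in H as [H|H]; nia. }
  assert (Hd : (l' | w' * (2 * w'))) by (exists (c * l'); nia).
  apply Z.gauss in Hd; [|exact Hcop].
  assert (Hd2 : (l' | w' * 2)) by (rewrite Z.mul_comm; exact Hd).
  apply Z.gauss in Hd2; [|exact Hcop].
  apply Z.divide_pos_le in Hd2; [|lia].
  assert (l' = 1 \/ l' = 2) as [E|E] by lia.
  - exists w'. rewrite Hw', Hl', E. ring.
  - exfalso. subst l'.
    assert (Hw2 : w'^2 = 2*c) by lia.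
    destruct (Z.Even_or_Odd w') as [[q Hq]|[q Hq]]; [|nia].
    rewrite Hq in Hcop. replace 2 with (2*1) in Hcop at 1 by reflexivity.
    rewrite Z.gcd_mul_mono_l in Hcop. rewrite Z.gcd_1_l in Hcop. simpl in Hcop. lia.
Qed.

Lemma lam_div_Q3 a b s t : 0 < Z.gcd (Q1 a b s t) (Q2 a b s t) ->
  (Z.gcd (Q1 a b s t) (Q2 a b s t) | Q3 a b s t).
Proof.
  intros Hl. set (l := Z.gcd (Q1 a b s t) (Q2 a b s t)) in *.
  destruct (Z.gcd_divide_l (Q1 a b s t) (Q2 a b s t)) as [u Hu].
  destruct (Z.gcd_divide_r (Q1 a b s t) (Q2 a b s t)) as [v Hv].
  fold l in Hu, Hv.
  apply (sqdiv _ _ (DD a b * u^2 + EE a b * v^2)); [exact Hl|].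
  rewrite <- conicQ. rewrite Hu, Hv. ring.
Qed.


Definition fmap (a b : Z) (q : Z * Z) : Z * Z * Z :=
  let '(s, t) := q in
  let l := Z.gcd (Q1 a b s t) (Q2 a b s t) in
  ((- Q1 a b s t) / l, (- Q2 a b s t) / l, (- Q3 a b s t) / l).

Definition gmap (a b : Z) (p : Z * Z * Z) : Z * Z :=
  let '(x, y, z) := p in
  let s0 := DD a b * (a*x + z) in
  let t0 := DD a b * x - EE a b * y + 2*a*z in
  let d := Z.gcd s0 t0 in
  if t0 <? 0 then (- (s0 / d), - (t0 / d)) else (s0 / d, t0 / d).

Lemma f_of_k a b s t k x y z : k < 0 -> Z.gcd x y = 1 ->
  Q1 a b s t = k * x -> Q2 a b s t = k * y -> Q3 a b s t = k * z ->
  fmap a b (s, t) = (x, y, z).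
Proof.
  intros Hk Hg H1 H2 H3. unfold fmap. rewrite H1, H2, H3.
  rewrite Z.gcd_mul_mono_l, Hg.
  replace (Z.abs k * 1) with (- k) by lia.
  replace (- (k*x)) with (x * -k) by ring.
  replace (- (k*y)) with (y * -k) by ring.
  replace (- (k*z)) with (z * -k) by ring.
  rewrite !Z.div_mul by lia. reflexivity.
Qed.

Lemma core_k a b s t d N x y z : 0 < a -> 0 < b -> DD a b <> 0 -> d <> 0 ->
  0 < x -> 0 < y -> 0 < z -> Z.gcd x y = 1 -> ~ (s = 0 /\ t = 0) ->
  d^2 * Q1 a b s t = N * x -> d^2 * Q2 a b s t = N * y -> d^2 * Q3 a b s t = N * z ->
  exists k, k < 0 /\ Q1 a b s t = k * x /\ Q2 a b s t = k * y /\ Q3 a b s t = k * z.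
Proof.
  intros Ha Hb HD Hd Hx Hy Hz Hg Hst H1 H2 H3.
  assert (Hd2 : d^2 <> 0) by nia.
  assert (E12 : x * Q2 a b s t = y * Q1 a b s t).
  { apply (Z.mul_reg_l _ _ (d^2)); [exact Hd2|]. nia. }
  assert (E13 : x * Q3 a b s t = z * Q1 a b s t).
  { apply (Z.mul_reg_l _ _ (d^2)); [exact Hd2|]. nia. }
  assert (Hdiv : (x | Q1 a b s t)).
  { apply (Z.gauss _ y). exists (Q2 a b s t). lia. exact Hg. }
  destruct Hdiv as [k Hk].
  assert (HQ2 : Q2 a b s t = k * y) by nia.
  assert (HQ3 : Q3 a b s t = k * z) by nia.
  exists k. split; [|split; [lia|split; assumption]].
  destruct (Z_lt_le_dec k 0) as [Hk0|Hk0]; [exact Hk0|exfalso].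
  destruct (Z.eq_dec k 0) as [->|Hk1].
  - apply Hst. apply (Q12_zero a b); auto; lia.
  - apply (Q_not_all_pos a b s t Ha Hb HD). nia.
Qed.


Lemma gM a b x y z : 0 < a -> 0 < b -> Z.gcd a b = 1 -> a * b <> 1 ->
  0 < x -> 0 < y -> 0 < z -> (a^2 - b^2)*x^2 + (a^2 + b^2)*y^2 = 2*z^2 ->
  Z.gcd x y = 1 ->
  let '(s, t) := gmap a b (x, y, z) in
  0 < t /\ Z.gcd s t = 1 /\
  exists k, k < 0 /\ Q1 a b s t = k * x /\ Q2 a b s t = k * y /\ Q3 a b s t = k * z.
Proof.
  intros Ha Hb Hab Hab1 Hx Hy Hz Heq Hg.
  pose proof (DD_nz a b Ha Hb Hab Hab1) as HD.
  pose proof (EE_pos a b Ha) as HE.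
  assert (HC : DD a b * x^2 + EE a b * y^2 - 2*z^2 = 0) by (unfold DD, EE; lia).
  unfold gmap.
  set (s0 := DD a b * (a*x + z)). set (t0 := DD a b * x - EE a b * y + 2*a*z).
  pose proof (idQ1 a b x y z) as I1. pose proof (idQ2 a b x y z) as I2.
  pose proof (idQ3 a b x y z) as I3. fold s0 t0 in I1, I2, I3.
  rewrite HC, Z.mul_0_r in I1, I2, I3. rewrite Z.sub_0_r in I2, I3. rewrite Z.add_0_r in I1.
  assert (Ht0 : t0 <> 0).
  { intros E. rewrite E in I2. unfold Q2 in I2.
    assert (s0 = 0) by nia. unfold s0 in H. nia. }
  set (d := Z.gcd s0 t0).
  assert (Hd : 0 < d).
  { pose proof (Z.gcd_nonneg s0 t0). assert (d <> 0) by (unfold d; rewrite Z.gcd_eq_0; lia). lia. }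
  destruct (Z.gcd_divide_l s0 t0) as [s' Hs']. destruct (Z.gcd_divide_r s0 t0) as [t' Ht'].
  fold d in Hs', Ht'.
  assert (Es : s0 / d = s') by (rewrite Hs', Z.div_mul; lia).
  assert (Et : t0 / d = t') by (rewrite Ht', Z.div_mul; lia).
  assert (Hcop : Z.gcd s' t' = 1) by (rewrite <- Es, <- Et; apply Z.gcd_div_gcd; [lia|reflexivity]).
  assert (Hnz : ~ (s' = 0 /\ t' = 0)) by (intros [_ E]; subst t'; lia).
  rewrite Es, Et.
  assert (K1 : d^2 * Q1 a b s' t' = (-2*DD a b*EE a b*t0) * x)
    by (rewrite <- Q1sc, (Z.mul_comm d s'), (Z.mul_comm d t'), <- Hs', <- Ht', I1; ring).
  assert (K2 : d^2 * Q2 a b s' t' = (-2*DD a b*EE a b*t0) * y)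
    by (rewrite <- Q2sc, (Z.mul_comm d s'), (Z.mul_comm d t'), <- Hs', <- Ht', I2; ring).
  assert (K3 : d^2 * Q3 a b s' t' = (-2*DD a b*EE a b*t0) * z)
    by (rewrite <- Q3sc, (Z.mul_comm d s'), (Z.mul_comm d t'), <- Hs', <- Ht', I3; ring).
  destruct (t0 <? 0) eqn:Hlt.
  - apply Z.ltb_lt in Hlt.
    split; [nia|split].
    + rewrite Z.gcd_opp_l, Z.gcd_opp_r; exact Hcop.
    + apply (core_k a b (-s') (-t') d (-2*DD a b*EE a b*t0)); auto; try lia.
      * replace (-s') with (-1*s') by ring; replace (-t') with (-1*t') by ring; rewrite Q1sc; replace ((-1)^2) with 1 by reflexivity; lia.
      * replace (-s') with (-1*s') by ring; replace (-t') with (-1*t') by ring; rewrite Q2sc; replace ((-1)^2) with 1 by reflexivity; lia.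
      * replace (-s') with (-1*s') by ring; replace (-t') with (-1*t') by ring; rewrite Q3sc; replace ((-1)^2) with 1 by reflexivity; lia.
  - apply Z.ltb_ge in Hlt.
    split; [nia|split; [exact Hcop|]].
    apply (core_k a b s' t' d (-2*DD a b*EE a b*t0)); auto; lia.
Qed.


Lemma gf a b s t : 0 < a -> 0 < b -> Z.gcd a b = 1 -> a * b <> 1 ->
  Z.gcd s t = 1 -> 0 < t -> 0 < - Q3 a b s t -> 0 < - Q1 a b s t -> 0 < - Q2 a b s t ->
  exists x y z, fmap a b (s, t) = (x, y, z) /\
   0 < x /\ 0 < y /\ 0 < z /\ (a^2 - b^2)*x^2 + (a^2 + b^2)*y^2 = 2*z^2 /\
   Z.gcd x y = 1 /\ gmap a b (x, y, z) = (s, t) /\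
   - Q1 a b s t = Z.gcd (Q1 a b s t) (Q2 a b s t) * x /\
   - Q2 a b s t = Z.gcd (Q1 a b s t) (Q2 a b s t) * y.
Proof.
  intros Ha Hb Hab Hab1 Hg Ht H3 H1 H2.
  pose proof (DD_nz a b Ha Hb Hab Hab1) as HD.
  pose proof (EE_pos a b Ha) as HE.
  set (l := Z.gcd (Q1 a b s t) (Q2 a b s t)).
  assert (Hl : 0 < l).
  { pose proof (Z.gcd_nonneg (Q1 a b s t) (Q2 a b s t)).
    assert (l <> 0) by (unfold l; rewrite Z.gcd_eq_0; lia). lia. }
  destruct (Z.gcd_divide_l (Q1 a b s t) (Q2 a b s t)) as [q1 Hq1].
  destruct (Z.gcd_divide_r (Q1 a b s t) (Q2 a b s t)) as [q2 Hq2].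
  destruct (lam_div_Q3 a b s t Hl) as [q3 Hq3].
  fold l in Hq1, Hq2, Hq3.
  assert (Hf : fmap a b (s, t) = (-q1, -q2, -q3)).
  { unfold fmap. fold l. rewrite Hq1, Hq2, Hq3.
    replace (- (q1*l)) with (-q1 * l) by ring.
    replace (- (q2*l)) with (-q2 * l) by ring.
    replace (- (q3*l)) with (-q3 * l) by ring.
    rewrite !Z.div_mul by lia. reflexivity. }
  exists (-q1), (-q2), (-q3). split; [exact Hf|].
  rewrite Hq1 in H1. rewrite Hq2 in H2. rewrite Hq3 in H3.
  split; [clear - H1 Hl; nia|split; [clear - H2 Hl; nia|split; [clear - H3 Hl; nia|]]].
  split.
  { pose proof (conicQ a b s t) as C. rewrite Hq1, Hq2, Hq3 in C.
    assert (Hz : l^2 * (DD a b*q1^2 + EE a b*q2^2 - 2*q3^2) = 0).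
    { transitivity (DD a b*(q1*l)^2 + EE a b*(q2*l)^2 - 2*(q3*l)^2); [ring|rewrite C; ring]. }
    apply Z.mul_eq_0 in Hz as [Hz|Hz]; [clear - Hz Hl; nia|].
    unfold DD, EE in Hz. transitivity ((a ^ 2 - b ^ 2) * q1 ^ 2 + (a ^ 2 + b ^ 2) * q2 ^ 2); [ring|]. 
    transitivity (2 * q3^2); [clear - Hz; lia|ring]. }
  split.
  { rewrite Z.gcd_opp_l, Z.gcd_opp_r.
    assert (q1 = Q1 a b s t / l) by (rewrite Hq1, Z.div_mul; lia).
    assert (q2 = Q2 a b s t / l) by (rewrite Hq2, Z.div_mul; lia).
    rewrite H, H0. apply Z.gcd_div_gcd; [lia|reflexivity]. }
  split; [|split; [rewrite Hq1; ring|rewrite Hq2; ring]].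
  unfold gmap.
  set (s0 := DD a b * (a * - q1 + - q3)).
  set (t0 := DD a b * - q1 - EE a b * - q2 + 2 * a * - q3).
  set (K := 2 * DD a b * EE a b * t).
  assert (Es : l * s0 = K * s).
  { unfold s0, K. pose proof (fwd1 a b s t) as F. rewrite Hq1, Hq3 in F.
    transitivity (-(DD a b) * (a*(q1*l) + q3*l)); [ring|]. rewrite F; ring. }
  assert (Et : l * t0 = K * t).
  { unfold t0, K. pose proof (fwd2 a b s t) as F. rewrite Hq1, Hq2, Hq3 in F.
    transitivity (-(DD a b * (q1*l) - EE a b * (q2*l) + 2*a*(q3*l))); [ring|]. rewrite F; ring. }
  assert (HK : K <> 0) by (unfold K; clear - HD HE Ht; nia).
  set (d := Z.gcd s0 t0).
  assert (Eld : l * d = Z.abs K).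
  { unfold d. rewrite <- (Z.abs_eq l) at 1 by lia.
    rewrite <- Z.gcd_mul_mono_l, Es, Et, Z.gcd_mul_mono_l, Hg. ring. }
  assert (Hd : 0 < d) by (clear - Eld Hl HK; nia).
  destruct (Z_lt_le_dec 0 K) as [Kp|Kn].
  - rewrite Z.abs_eq in Eld by lia.
    assert (s0 = s * d) by (apply (Z.mul_reg_l _ _ l); [lia|]; rewrite Es; transitivity (s * (l*d)); [rewrite Eld; ring|ring]).
    assert (t0 = t * d) by (apply (Z.mul_reg_l _ _ l); [lia|]; rewrite Et; transitivity (t * (l*d)); [rewrite Eld; ring|ring]).
    assert (t0 <? 0 = false) by (apply Z.ltb_ge; rewrite H0; clear - Ht Hd; nia).
    rewrite H4. rewrite H, H0, !Z.div_mul by lia. reflexivity.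
  - rewrite Z.abs_neq in Eld by lia.
    assert (s0 = (-s) * d) by (apply (Z.mul_reg_l _ _ l); [lia|]; rewrite Es; transitivity (-s * (l*d)); [rewrite Eld; ring|ring]).
    assert (t0 = (-t) * d) by (apply (Z.mul_reg_l _ _ l); [lia|]; rewrite Et; transitivity (-t * (l*d)); [rewrite Eld; ring|ring]).
    assert (t0 <? 0 = true) by (apply Z.ltb_lt; rewrite H0; clear - Ht Hd; nia).
    rewrite H4. rewrite H, H0, !Z.div_mul by lia. f_equal; ring.
Qed.


Lemma bound_fw (l M x : Z) (B : R) : 0 < l -> 0 < M ->
  (IZR (l*x) <= IZR l * B / IZR M)%R -> (IZR (M*x) <= B)%R.
Proof.
  intros Hl HM H. rewrite mult_IZR in *.
  apply IZR_lt in Hl. apply IZR_lt in HM.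
  apply (Rmult_le_compat_l (IZR M)) in H; [|lra].
  replace (IZR M * (IZR l * B / IZR M))%R with (IZR l * B)%R in H by (field; lra).
  apply (Rmult_le_reg_l (IZR l)); [lra|]. nra.
Qed.

Lemma bound_bw (l M x : Z) (B : R) : 0 < l -> 0 < M ->
  (IZR (M*x) <= B)%R -> (IZR (l*x) <= IZR l * B / IZR M)%R.
Proof.
  intros Hl HM H. rewrite mult_IZR in *.
  apply IZR_lt in Hl. apply IZR_lt in HM.
  apply (Rmult_le_reg_l (IZR M)); [lra|].
  replace (IZR M * (IZR l * B / IZR M))%R with (IZR l * B)%R by (field; lra).
  nra.
Qed.

Lemma frac_unique a D s t : 0 < a -> Z.gcd s t = 1 -> 0 < t -> 2*a*s = D*t ->
  s = D / Z.gcd D (2*a) /\ t = (2*a) / Z.gcd D (2*a).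
Proof.
  intros Ha Hg Ht He.
  set (g0 := Z.gcd D (2*a)).
  assert (Hg0 : 0 < g0).
  { pose proof (Z.gcd_nonneg D (2*a)). assert (g0 <> 0) by (unfold g0; rewrite Z.gcd_eq_0; lia). lia. }
  destruct (Z.gcd_divide_l D (2*a)) as [D' HD']. destruct (Z.gcd_divide_r D (2*a)) as [A' HA'].
  fold g0 in HD', HA'.
  assert (ED : D / g0 = D') by (rewrite HD', Z.div_mul; lia).
  assert (EA : 2*a / g0 = A') by (rewrite HA', Z.div_mul; lia).
  assert (Hc : Z.gcd D' A' = 1) by (rewrite <- ED, <- EA; apply Z.gcd_div_gcd; [lia|reflexivity]).
  rewrite ED, EA.
  assert (HAp : 0 < A') by nia.
  assert (E2 : A' * s = D' * t).
  { apply (Z.mul_reg_l _ _ g0); [lia|]. transitivity (2*a*s); [rewrite HA'; ring|].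
    rewrite He, HD'; ring. }
  assert (H1 : (t | A')).
  { apply (Z.gauss _ s). exists D'. lia. rewrite Z.gcd_comm; exact Hg. }
  assert (H2 : (A' | t)).
  { apply (Z.gauss _ D'). exists s. lia. rewrite Z.gcd_comm; exact Hc. }
  assert (t = A') by (apply Z.divide_antisym_nonneg; auto; lia).
  split; [|lia]. apply (Z.mul_reg_l _ _ A'); [lia|]. rewrite E2, H; ring.
Qed.


Definition box (a b : Z) (B : R) : list (Z * Z * Z) :=
  list_prod (list_prod (rng (up B)) (rng (up B))) (rng (EE a b * up B * up B + 1)).

Lemma M_box a b B p : 0 < a -> 0 < b -> M_set a b B p -> In p (box a b B).
Proof.
  intros Ha Hb. destruct p as [[x y] z]. unfold M_set.
  intros [Hx [Hy [Hz [He [Hg HB]]]]].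
  destruct (archimed B) as [HK _].
  assert (Hm : (IZR x <= B)%R /\ (IZR y <= B)%R).
  { split; (eapply Rle_trans; [apply IZR_le|exact HB]);
    pose proof (Z.le_max_l a b); pose proof (Z.le_max_l x y); pose proof (Z.le_max_r x y); nia. }
  destruct Hm as [Hxb Hyb].
  assert (Hx' : x < up B) by (apply lt_IZR; lra).
  assert (Hy' : y < up B) by (apply lt_IZR; lra).
  set (K := up B) in *.
  assert (Hz' : z < EE a b * K * K + 1).
  { unfold EE. clear - Hx Hy Hz He Hx' Hy' Ha Hb.
    assert (A1 : z <= z*z) by nia.
    assert (A2 : x*x <= K*K) by nia. assert (A3 : y*y <= K*K) by nia.
    assert (A4 : 0 <= b*b) by nia.
    assert (A5 : 2*(z*z) = (a*a-b*b)*(x*x) + (a*a+b*b)*(y*y)) by (transitivity (2*z^2); [ring|]; rewrite <- He; ring).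
    assert (A6 : (a*a-b*b)*(x*x) <= (a*a+b*b)*(K*K)) by nia.
    assert (A7 : (a*a+b*b)*(y*y) <= (a*a+b*b)*(K*K)) by nia.
    replace ((a^2+b^2)*K*K) with ((a*a+b*b)*(K*K)) by ring. lia. }
  unfold box. apply in_prod; [apply in_prod|]; apply in_rng; lia.
Qed.

Lemma gfull a b B p : 0 < a -> 0 < b -> Z.gcd a b = 1 -> a * b <> 1 ->
  M_set a b B p -> fmap a b (gmap a b p) = p.
Proof.
  intros Ha Hb Hab Hab1. destruct p as [[x y] z]. unfold M_set.
  intros [Hx [Hy [Hz [He [Hg HB]]]]].
  pose proof (gM a b x y z Ha Hb Hab Hab1 Hx Hy Hz He Hg) as G.
  destruct (gmap a b (x, y, z)) as [s t].
  destruct G as [Ht [Hst [k [Hk [H1 [H2 H3]]]]]].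
  apply (f_of_k a b s t k); auto.
Qed.

Definition Xbad (a b : Z) : list (Z * Z) :=
  [(0, 1); (a, 1); (DD a b / Z.gcd (DD a b) (2*a), (2*a) / Z.gcd (DD a b) (2*a))].

Lemma g_ST a b B p : 0 < a -> 0 < b -> Z.gcd a b = 1 -> a * b <> 1 ->
  M_set a b B p -> ~ In (gmap a b p) (Xbad a b) -> ST_set a b B (gmap a b p).
Proof.
  intros Ha Hb Hab Hab1. destruct p as [[x y] z]. unfold M_set.
  intros [Hx [Hy [Hz [He [Hg HB]]]]] Hnot.
  pose proof (gM a b x y z Ha Hb Hab Hab1 Hx Hy Hz He Hg) as G.
  destruct (gmap a b (x, y, z)) as [s t].
  destruct G as [Ht [Hst [k [Hk [H1 [H2 H3]]]]]].
  simpl in Hnot.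
  assert (Hl : Z.gcd (Q1 a b s t) (Q2 a b s t) = - k).
  { rewrite H1, H2, Z.gcd_mul_mono_l, Hg. lia. }
  unfold ST_set. rewrite Hl.
  assert (HM : 0 < Z.max a b) by lia.
  assert (HBx : (IZR (Z.max a b * x) <= B)%R /\ (IZR (Z.max a b * y) <= B)%R).
  { split; (eapply Rle_trans; [apply IZR_le|exact HB]);
    pose proof (Z.le_max_l x y); pose proof (Z.le_max_r x y); clear - HM H H0; nia. }
  destruct HBx as [HBx HBy].
  split; [exact Hst|].
  split.
  { intros E. apply Z.mul_eq_0 in E as [E|E].
    - subst s. rewrite Z.gcd_0_l in Hst. apply Hnot. left. f_equal. lia.
    - assert (s = a * t) by lia. subst s.
      rewrite Z.gcd_comm, Z.mul_comm, Z.gcd_mul_diag_l in Hst by lia.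
      subst t. apply Hnot. right; left. f_equal. lia. }
  split.
  { intros E.
    assert (E2 : 2*a*s = DD a b * t).
    { apply eq_IZR. unfold DD.
      assert (Ht0 : IZR t <> 0%R) by (apply not_0_IZR; lia).
      assert (Ha0 : IZR (2*a) <> 0%R) by (apply not_0_IZR; lia).
      assert (Hs0 : (IZR s = IZR (a^2-b^2) / IZR (2*a) * IZR t)%R) by (rewrite <- E; field; auto).
      rewrite (mult_IZR (2*a) s), Hs0, (mult_IZR (a^2-b^2) t). field. exact Ha0. }
    destruct (frac_unique a (DD a b) s t Ha Hst Ht E2) as [-> ->].
    apply Hnot. right; right; left. reflexivity. }
  split; [exact Ht|].
  split; [rewrite H3; clear - Hk Hz; nia|].
  split; [rewrite H1; clear - Hk Hx; nia|].
  split; [rewrite H1; replace (- (k*x)) with (-k * x) by ring; apply bound_bw; auto; lia|].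
  split; [rewrite H2; clear - Hk Hy; nia|].
  rewrite H2; replace (- (k*y)) with (-k * y) by ring; apply bound_bw; auto; lia.
Qed.

Lemma f_M a b B q : 0 < a -> 0 < b -> Z.gcd a b = 1 -> a * b <> 1 ->
  ST_set a b B q -> M_set a b B (fmap a b q) /\ gmap a b (fmap a b q) = q.
Proof.
  intros Ha Hb Hab Hab1. destruct q as [s t]. unfold ST_set.
  intros [Hg [Hs [Hfr [Ht [H3 [H1 [HB1 [H2 HB2]]]]]]]].
  destruct (gf a b s t Ha Hb Hab Hab1 Hg Ht H3 H1 H2) as
    [x [y [z [Hf [Hx [Hy [Hz [He [Hgxy [Hgm [E1 E2]]]]]]]]]]].
  rewrite Hf. split; [|exact Hgm].
  unfold M_set. do 5 (split; [assumption|]).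
  set (l := Z.gcd (Q1 a b s t) (Q2 a b s t)) in *.
  assert (Hl : 0 < l) by (clear - E1 H1 Hx; nia).
  assert (HM : 0 < Z.max a b) by lia.
  rewrite E1 in HB1. rewrite E2 in HB2.
  apply bound_fw in HB1; auto. apply bound_fw in HB2; auto.
  destruct (Z.max_spec x y) as [[_ ->]|[_ ->]]; assumption.
Qed.


Lemma pair_dec : forall x y : Z * Z, {x = y} + {x <> y}.
Proof. decide equality; apply Z.eq_dec. Qed.
Lemma triple_dec : forall x y : Z * Z * Z, {x = y} + {x <> y}.
Proof. decide equality; first [apply pair_dec|apply Z.eq_dec]. Qed.

Theorem lemma5p1 :
  exists C : R, forall (a b : Z) (B : R),
    0 < a -> 0 < b -> Z.gcd a b = 1 -> a * b <> 1 ->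
    exists m n : nat,
      card_is (M_set a b B) m /\ card_is (ST_set a b B) n /\
      (Rabs (INR m - INR n) <= C)%R.
Proof.
  exists 3%R. intros a b B Ha Hb Hab Hab1.
  destruct (card_of_incl (M_set a b B) (box a b B) (fun p H => M_box a b B p Ha Hb H))
    as [m Hm].
  destruct Hm as [lM [HndM [HlM HinM]]].
  destruct (card_of_incl (ST_set a b B) (map (gmap a b) lM)) as [n Hn].
  { intros q Hq. destruct (f_M a b B q Ha Hb Hab Hab1 Hq) as [HMq Hgq].
    apply in_map_iff. exists (fmap a b q). split; [exact Hgq|]. apply HinM; exact HMq. }
  exists m, n. split; [exists lM; auto|split; [exact Hn|]].
  destruct Hn as [lS [HndS [HlS HinS]]].
  assert (Hle1 : (n <= m)%nat).
  { rewrite <- HlM, <- HlS, <- (length_map (fmap a b) lS).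
    apply NoDup_incl_length.
    - apply nodup_map_inj; auto. intros q q' Hq Hq' E.
      apply HinS in Hq, Hq'.
      destruct (f_M a b B q Ha Hb Hab Hab1 Hq) as [_ G1].
      destruct (f_M a b B q' Ha Hb Hab Hab1 Hq') as [_ G2].
      rewrite <- G1, <- G2, E. reflexivity.
    - intros p Hp. apply in_map_iff in Hp as [q [<- Hq]]. apply HinM.
      apply HinS in Hq. apply (f_M a b B q Ha Hb Hab Hab1 Hq). }
  assert (Hle2 : (m <= 3 + n)%nat).
  { rewrite <- HlM, <- HlS.
    replace 3%nat with (length (Xbad a b)) by reflexivity.
    rewrite <- (length_map (fmap a b) lS).
    apply (count2 triple_dec pair_dec (gmap a b)); auto.
    - intros p p' Hp Hp' E. apply HinM in Hp, Hp'.
      rewrite <- (gfull a b B p Ha Hb Hab Hab1 Hp), <- (gfull a b B p' Ha Hb Hab Hab1 Hp'), E.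
      reflexivity.
    - intros p Hp. apply HinM in Hp.
      destruct (In_dec pair_dec (gmap a b p) (Xbad a b)) as [HX|HX]; [left; exact HX|right].
      apply in_map_iff. exists (gmap a b p). split; [apply (gfull a b B p); auto|].
      apply HinS. apply g_ST; auto. }
  apply le_INR in Hle1. apply le_INR in Hle2. rewrite plus_INR in Hle2.
  replace (INR 3) with 3%R in Hle2 by (simpl; lra).
  apply Rabs_le. lra.
Qed.
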